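(* Suppose $K$ is a field, $\tau_{(i)}\neq0$ for all $i\in\Omega$, and that for all $B,D\in\mathcal{I}(\overline{\mathbf{P}})$, $|B|=|D|$ implies $\pi(\Omega,B)=\pi(\Omega,D)$. Then $\mathbf{P}$ is hierarchical.
   Context: $\Omega$ is a finite set and $\mathbf{P}=(\Omega,\preccurlyeq_{\mathbf{P}})$ a poset; $\overline{\mathbf{P}}$ is the dual poset and $\mathcal{I}(\overline{\mathbf{P}})$ its set of ideals (up-closed subsets of $\mathbf{P}$). For $Y\subseteq\Omega$: $\max(Y)$ is the set of maximal elements of $Y$ w.r.t. $\preccurlyeq_{\mathbf{P}}$; $\mathcal{I}(Y)$ is the set of down-closed subsets of $Y$. $\tau,\eta\in K^{\Omega}$. For $D,I\subseteq\Omega$, $\varphi(D,I)=(-1)^{|I\cap D|}\big(\prod_{i\in I-\max(I)}\tau_{(i)}\big)\big(\prod_{i\in\max(I)-D}\eta_{(i)}\big)$ if $I\cap D\subseteq\max(I)$, and $0$ otherwise; for $D\subseteq Y\subseteq\Omega$, $\pi(Y,D)=\sum_{I\in\mathcal{I}(Y)}\varphi(D,I)x^{|I|}\in K[x]$. $\mathrm{len}(y)$ is the largest cardinality of a chain in $\mathbf{P}$ with greatest element $y$; $\mathbf{P}$ is hierarchical if $\mathrm{len}(u)+1\leqslant\mathrm{len}(v)$ implies $u\preccurlyeq_{\mathbf{P}}v$. *)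

(* Defs.v *)
From mathcomp Require Import all_boot all_order all_algebra.
Set Implicit Arguments. Unset Strict Implicit. Unset Printing Implicit Defensive.
Import GRing.Theory.
Local Open Scope ring_scope.

Section PosetDefs.
Variable T : finType.
Variable le : rel T.

Definition is_partial_order : Prop :=
  [/\ reflexive le, antisymmetric le & transitive le].

Definition maxs (Y : {set T}) : {set T} :=
  [set y in Y | [forall z in Y, le y z ==> (z == y)]].

Definition down_closed_in (Y I : {set T}) : bool :=
  (I \subset Y) && [forall i in I, forall j in Y, le j i ==> (j \in I)].

(* ideals of the dual poset = up-closed subsets of Omega *)
Definition up_closed (B : {set T}) : bool :=
  [forall x in B, forall y, le x y ==> (y \in B)].

Definition is_chain (C : {set T}) : bool :=
  [forall x in C, forall y in C, le x y || le y x].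

Definition len (y : T) : nat :=
  \max_(C : {set T} | [&& is_chain C, y \in C & [forall c in C, le c y]]) #|C|.

Definition hierarchical : Prop :=
  forall u v : T, (len u + 1 <= len v)%N -> le u v.

Variable K : fieldType.
Variables tau eta : T -> K.

Definition phi (D I : {set T}) : K :=
  if I :&: D \subset maxs I then
    (-1) ^+ #|I :&: D| * (\prod_(i in I :\: maxs I) tau i)
      * (\prod_(i in maxs I :\: D) eta i)
  else 0.

Definition pi_poly (Y D : {set T}) : {poly K} :=
  \sum_(I : {set T} | down_closed_in Y I) (phi D I)%:P * 'X^#|I|.

End PosetDefs.

(* Main.v *)
Require Import Defs.
From mathcomp Require Import all_boot all_order all_algebra.
Import GRing.Theory.
Set Implicit Arguments. Unset Strict Implicit. Unset Printing Implicit Defensive.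
Local Open Scope ring_scope.

Definition lsum (T : finType) (le : rel T) (Y : {set T}) : bool :=
  [forall y in Y, forall w in ~: Y, le y w].

Lemma lsumP (T : finType) (le : rel T) (Y : {set T}) y w :
  lsum le Y -> y \in Y -> w \notin Y -> le y w.
Proof.
move=> /forall_inP H yY wY; have /forall_inP := H y yY; apply.
by rewrite in_setC.
Qed.

Lemma lsum_down (T : finType) (le : rel T) (Y : {set T}) y c :
  is_partial_order le -> lsum le Y -> y \in Y -> le c y -> c \in Y.
Proof.
case=> _ anti _ lY yY cy; apply/negPn/negP => cY.
have yc := lsumP lY yY cY.
have e : c = y by apply: anti; rewrite cy yc.
by move: cY; rewrite e yY.
Qed.

Lemma maxsP (T : finType) (le : rel T) (Y : {set T}) y :
  y \in maxs le Y -> y \in Y /\ forall z, z \in Y -> le y z -> z = y.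
Proof.
rewrite /maxs in_set => /andP[yY /forall_inP H]; split => // z zY yz.
by apply/eqP; move: (H z zY) => /implyP; apply.
Qed.

Lemma maxs_sub (T : finType) (le : rel T) (Y : {set T}) y :
  y \in maxs le Y -> y \in Y.
Proof. by case/maxsP. Qed.

Lemma exists_max (T : finType) (le : rel T) (A : {set T}) a :
  is_partial_order le -> a \in A ->
  exists2 x, (x \in A) && le a x & forall z, z \in A -> le x z -> z = x.
Proof.
move=> [refl anti tr] aA.
have P0 : (a \in A) && le a a by rewrite aA refl.
case: (@arg_maxnP _ a (fun x => (x \in A) && le a x) (fun x => #|[set z | le z x]|) P0) => x /andP[xA ax] xmax.
exists x; first by rewrite xA ax.
move=> z zA xz.
have az : le a z by apply: tr ax xz.
have := xmax z; rewrite /= zA az => /(_ isT) hcard.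
have sub : [set t | le t x] \subset [set t | le t z].
  by apply/subsetP => t; rewrite !in_set => tx; apply: tr tx xz.
have e : [set t | le t x] = [set t | le t z].
  by apply/eqP; rewrite eqEcard sub hcard.
have : z \in [set t | le t z] by rewrite in_set refl.
rewrite -e in_set => zx; apply: anti; by rewrite zx xz.
Qed.

Lemma coef_pi (T : finType) (le : rel T) (K : fieldType) (tau eta : T -> K) D k :
  (pi_poly le tau eta [set: T] D)`_k =
  \sum_(I : {set T} | down_closed_in le [set: T] I) phi le tau eta D I * (k == #|I|)%:R.
Proof. by rewrite /pi_poly coef_sum; apply: eq_bigr => I _; rewrite coefCM coefXn. Qed.

Lemma downY (T : finType) (le : rel T) (Y : {set T}) :
  is_partial_order le -> lsum le Y -> down_closed_in le [set: T] Y.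
Proof.
move=> po lY; rewrite /down_closed_in subsetT /=.
apply/forall_inP => i iY; apply/forall_inP => j _; apply/implyP => ji.
exact: lsum_down po lY iY ji.
Qed.

Lemma uniq_down (T : finType) (le : rel T) (Y I : {set T}) :
  lsum le Y -> down_closed_in le [set: T] I -> #|I| = #|Y| -> I = Y.
Proof.
move=> lY /andP[_ /forall_inP dI] cI.
case: (boolP (I \subset Y)) => sub.
  by apply/eqP; rewrite eqEcard sub cI leqnn.
case/subsetPn: sub => w wI wY.
have sub : Y \subset I.
  apply/subsetP => y yY.
  have /forall_inP := dI w wI; move/(_ y (in_setT y)) => /implyP; apply.
  exact: lsumP lY yY wY.
by apply/esym/eqP; rewrite eqEcard sub cI leqnn.
Qed.

Lemma coef_Y (T : finType) (le : rel T) (K : fieldType) (tau eta : T -> K) D Y :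
  is_partial_order le -> lsum le Y ->
  (pi_poly le tau eta [set: T] D)`_#|Y| = phi le tau eta D Y.
Proof.
move=> po lY; rewrite coef_pi (bigD1 Y) /=; last exact: downY.
rewrite eqxx mulr1 big1 ?addr0 // => I /andP[dI IY].
suff -> : (#|Y| == #|I|) = false by rewrite mulr0.
apply/negbTE; apply: contra IY => /eqP e; apply/eqP.
exact: uniq_down lY dI (esym e).
Qed.

Lemma step (T : finType) (le : rel T) (K : fieldType) (tau eta : T -> K) :
  is_partial_order le ->
  (forall i : T, tau i != 0) ->
  (forall B D : {set T}, up_closed le B -> up_closed le D ->
     #|B| = #|D| ->
     pi_poly le tau eta [set: T] B = pi_poly le tau eta [set: T] D) ->
  forall Y, lsum le Y -> lsum le (Y :\: maxs le Y).
Proof.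
move=> po tnz H Y lY.
have [refl anti tr] := po.
apply/forall_inP => y; rewrite in_setD => /andP[ynm yY].
apply/forall_inP => w; rewrite in_setC in_setD negb_and negbK => wc.
case/orP: wc => [wm | wnY]; last exact: lsumP lY yY wnY.
apply/negPn/negP => nyw.
have yY'0 : y \in Y :\: maxs le Y by rewrite in_setD ynm yY.
have [x /andP[xY' yx] xmax] := exists_max po yY'0.
move: xY'; rewrite in_setD => /andP[xnm xY].
have nxw : ~~ le x w by apply: contra nyw => xw; apply: tr yx xw.
have above : forall z, z \in Y -> le x z -> z != x -> z \in maxs le Y.
  move=> z zY xz zx; apply/negPn/negP => zm.
  by move: zx; rewrite (xmax z _ xz) ?eqxx // in_setD zm zY.
have mxY := @maxs_sub _ le Y.
pose D1 := ~: Y :|: maxs le Y.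
pose D2 := ~: Y :|: (x |: (maxs le Y :\ w)).
have up1 : up_closed le D1.
  apply/forall_inP => a aD; apply/forallP => b; apply/implyP => ab.
  rewrite /D1 in_setU in_setC in aD; rewrite in_setU in_setC.
  case: (boolP (b \in Y)) => bY //=.
  case/orP: aD => [aY | am].
    by move: aY; rewrite (lsum_down po lY bY ab).
  by have [_ hm] := maxsP am; rewrite (hm b bY ab).
have up2 : up_closed le D2.
  apply/forall_inP => a aD; apply/forallP => b; apply/implyP => ab.
  rewrite /D2 in_setU in_setC in aD; rewrite in_setU in_setC.
  case: (boolP (b \in Y)) => bY //=.
  case/orP: aD => [aY | ].
    by move: aY; rewrite (lsum_down po lY bY ab).
  rewrite in_setU1 in_setD1 => /orP[/eqP ax | /andP[aw am]].
    subst a; rewrite in_setU1 in_setD1.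
    case: (eqVneq b x) => [-> | bx] //=.
    rewrite (above b bY ab bx) andbT.
    by apply: contraNneq nxw => <-.
  by have [_ hm] := maxsP am; rewrite (hm b bY ab) in_setU1 in_setD1 aw am orbT.
have c1 : D1 :&: Y = maxs le Y.
  apply/setP => z; rewrite /D1 in_setI in_setU in_setC.
  by case: (boolP (z \in maxs le Y)) => zm; [rewrite (mxY _ zm) | rewrite orbF andNb].
have c2 : D2 :&: Y = x |: (maxs le Y :\ w).
  apply/setP => z; rewrite /D2 in_setI in_setU in_setC.
  case: (boolP (z \in x |: (maxs le Y :\ w))) => zm; last by rewrite orbF andNb.
  rewrite orbT /=; move: zm; rewrite in_setU1 in_setD1 => /orP[/eqP -> //|/andP[_ /mxY //]].
have d1 : D1 :\: Y = ~: Y.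
  apply/setP => z; rewrite /D1 in_setD in_setU !in_setC.
  by case: (boolP (z \in Y)) => //= zY; rewrite andbF.
have d2 : D2 :\: Y = ~: Y.
  apply/setP => z; rewrite /D2 in_setD in_setU !in_setC.
  by case: (boolP (z \in Y)) => //= zY; rewrite andbF.
have card12 : #|D1| = #|D2|.
  rewrite -(cardsID Y D1) -(cardsID Y D2) c1 c2 d1 d2 cardsU1 in_setD1 (negbTE xnm) andbF.
  by rewrite (cardsD1 w (maxs le Y)) wm.
have := congr1 (fun p : {poly K} => p`_#|Y|) (H D1 D2 up1 up2 card12).
rewrite /= !coef_Y // /phi.
have -> : Y :&: D1 = maxs le Y by rewrite setIC.
rewrite subxx.
have -> : Y :&: D2 \subset maxs le Y = false.
  apply/negbTE/negP => /subsetP /(_ x); rewrite setIC c2 in_setU1 eqxx /= => /(_ isT).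
  by rewrite (negbTE xnm).
have -> : maxs le Y :\: D1 = set0.
  apply/setP => z; rewrite in_setD in_set0 /D1 in_setU; by case: (z \in maxs le Y); rewrite ?orbT ?andbF.
rewrite big_set0 mulr1 => /eqP; apply/negP.
rewrite mulf_neq0 // ?expf_neq0 ?oppr_eq0 ?oner_eq0 //.
by apply/prodf_neq0 => i _.
Qed.

Theorem proposition3p3 (T : finType) (le : rel T) (K : fieldType)
    (tau eta : T -> K) :
  is_partial_order le ->
  (forall i : T, tau i != 0) ->
  (forall B D : {set T}, up_closed le B -> up_closed le D ->
     #|B| = #|D| ->
     pi_poly le tau eta [set: T] B = pi_poly le tau eta [set: T] D) ->
  hierarchical le.
Proof.
move=> po tnz H u v huv.
have [refl anti tr] := po.
apply/negPn/negP => nuv.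
have P0 : lsum le [set: T] && (u \in [set: T]).
  rewrite in_setT andbT; apply/forall_inP => y _; apply/forall_inP => w.
  by rewrite in_setC in_setT.
case: (@arg_minnP _ [set: T] (fun Y => lsum le Y && (u \in Y)) (fun Y => #|Y|) P0).
move=> Y /andP[lY uY] Ymin.
have lY' := step po tnz H lY.
have uM : u \in maxs le Y.
  apply/negPn/negP => unm.
  have uY' : u \in Y :\: maxs le Y by rewrite in_setD unm uY.
  have := Ymin (Y :\: maxs le Y); rewrite lY' uY' => /(_ isT) hc.
  have e : Y :\: maxs le Y = Y by apply/eqP; rewrite eqEcard subsetDl hc.
  have [m /andP[mY _] mmax] := exists_max po uY.
  have mM : m \in maxs le Y.
    rewrite /maxs in_set mY /=; apply/forall_inP => z zY; apply/implyP => mz.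
    by rewrite (mmax z zY mz).
  by move: mY; rewrite -e in_setD mM.
have vY : v \in Y.
  apply/negPn/negP => vnY; by move: nuv; rewrite (lsumP lY uY vnY).
have below : forall c, le c v -> c != v -> le c u.
  move=> c cv cnv.
  have cY : c \in Y := lsum_down po lY vY cv.
  have cnm : c \notin maxs le Y.
    apply/negP => /maxsP [_ hm]; by move: cnv; rewrite (hm v vY cv) eqxx.
  apply: (lsumP lY'); first by rewrite in_setD cnm cY.
  by rewrite in_setD uM.
have lvu : (len le v <= len le u)%N.
  rewrite /len; apply/bigmax_leqP => C /and3P[ch vC /forall_inP Cv].
  pose C' := u |: (C :\ v).
  have unC : u \notin C :\ v.
    by rewrite in_setD1 negb_and; apply/orP; right; apply: contra nuv; apply: Cv.
  have cardC : #|C| = #|C'| by rewrite /C' cardsU1 unC (cardsD1 v C) vC.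
  rewrite cardC; apply: leq_bigmax_cond.
  have memC' : forall c, c \in C' -> c = u \/ (c \in C /\ c != v /\ le c u).
    move=> c; rewrite in_setU1 in_setD1 => /orP[/eqP -> | /andP[cv cC]]; first by left.
    by right; split => //; split => //; apply: below => //; apply: Cv.
  apply/and3P; split.
  - apply/forall_inP => a /memC' ha; apply/forall_inP => b /memC' hb.
    case: ha => [-> | [aC [_ au]]]; case: hb => [-> | [bC [_ bu]]].
    + by rewrite refl.
    + by rewrite bu orbT.
    + by rewrite au.
    + by move/forall_inP: ch => /(_ a aC) /forall_inP /(_ b bC).
  - by rewrite in_setU1 eqxx.
  - by apply/forall_inP => c /memC' [-> | [_ [_ cu]]] //; rewrite refl.
by move: (leq_trans huv lvu); rewrite addn1 ltnn.
Qed.
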